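(* For every nice graph $G$ with maximum degree $\Delta=\Delta(G)$, $\chi'_{qm\Sigma}(G)\le \left\lceil \frac{3\Delta+4}{2}\right\rceil$.
   Context: All graphs are simple and finite. A $k$-edge-coloring of $G$ is any map $c:E(G)\to\{1,\dots,k\}$ (adjacent edges may share colors). It induces $\sigma_c(v)=\sum_{u\in N(v)}c(vu)$. The coloring is neighbor sum distinguishing (NSD) if $\sigma_c(u)\ne\sigma_c(v)$ for every edge $uv$. It is quasi-majority if every vertex $v$ is incident to at most $\lceil d(v)/2\rceil$ edges of each single color. $\chi'_{qm\Sigma}(G)$ denotes the least $k$ such that $G$ has a $k$-edge-coloring that is both quasi-majority and NSD. A graph is nice if it has no connected component isomorphic to $K_2$. *)

(* Defs.v *)
From mathcomp Require Import all_boot.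
Set Implicit Arguments. Unset Strict Implicit. Unset Printing Implicit Defensive.

Definition simple_graph (T : finType) (e : rel T) : Prop :=
  symmetric e /\ irreflexive e.

Definition deg (T : finType) (e : rel T) (v : T) : nat := #|[set u | e v u]|.

Definition max_deg (T : finType) (e : rel T) : nat := \max_(v : T) deg e v.

(* nice: no connected component isomorphic to K2; in a simple graph a
   connected component is K2 iff it has exactly two vertices. *)
Definition nice (T : finType) (e : rel T) : Prop :=
  forall x : T, #|[set y | connect e x y]| != 2.

(* An edge colouring is a function c on ordered pairs, symmetric on edges;
   only its values on edges matter.  It is a k-edge-colouring if every edge
   gets a colour in {1,...,k}. *)
Definition edge_coloring (T : finType) (e : rel T) (k : nat) (c : T -> T -> nat) : Prop :=
  forall u v, e u v -> c u v = c v u /\ 1 <= c u v <= k.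

Definition sigma (T : finType) (e : rel T) (c : T -> T -> nat) (v : T) : nat :=
  \sum_(u | e v u) c v u.

Definition nsd (T : finType) (e : rel T) (c : T -> T -> nat) : Prop :=
  forall u v, e u v -> sigma e c u <> sigma e c v.

Definition ceil_div (a b : nat) : nat := (a + b - 1) %/ b.

Definition quasi_majority (T : finType) (e : rel T) (c : T -> T -> nat) : Prop :=
  forall (v : T) (j : nat), #|[set u | e v u && (c v u == j)]| <= ceil_div (deg e v) 2.

Definition qm_nsd_colorable (T : finType) (e : rel T) (k : nat) : Prop :=
  exists c : T -> T -> nat, [/\ edge_coloring e k c, quasi_majority e c & nsd e c].

(* Main.v *)
Require Import Defs.
From mathcomp Require Import all_boot zify.
Set Implicit Arguments. Unset Strict Implicit. Unset Printing Implicit Defensive.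

Lemma count_mem_le (s S : seq nat) : uniq s -> count (mem S) s <= size S.
Proof.
move=> us; rewrite -size_filter; apply: uniq_leq_size; first exact: filter_uniq.
by move=> x; rewrite mem_filter => /andP[].
Qed.

Definition avoid (k : nat) (F : seq nat) := [seq x <- iota 1 k | x \notin F].

Lemma avoid_size k (F : seq nat) : k - size F <= size (avoid k F).
Proof.
rewrite /avoid size_filter.
have := count_predC (mem F) (iota 1 k); rewrite size_iota.
have -> : count (predC (mem F)) (iota 1 k) = count (fun x => x \notin F) (iota 1 k) by [].
have := count_mem_le F (iota_uniq 1 k). lia.
Qed.

Lemma mem_avoid k (F : seq nat) x : (x \in avoid k F) = [&& 0 < x, x <= k & x \notin F].
Proof.
rewrite /avoid mem_filter mem_iota; case: (x \in F) => /=; rewrite ?andbF ?andbT //.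

Qed.

Lemma pigeon k (F : seq nat) : size F < k -> exists x, [/\ 0 < x, x <= k & x \notin F].
Proof.
move=> h; have := avoid_size k F.
case E: (avoid k F) => [|x s] /= hs; first by exfalso; lia.
have : x \in avoid k F by rewrite E inE eqxx.
by rewrite mem_avoid => /and3P[]; exists x.
Qed.

Lemma seq_min (X : seq nat) : 0 < size X -> exists2 x0 : nat, x0 \in X & forall x : nat, x \in X -> x0 <= x.
Proof.
elim: X => [//|a X IH] _.
case: X IH => [|b X] IH.
  by exists a; rewrite ?inE ?eqxx // => x; rewrite inE => /eqP->.
have [m mX hm] := IH isT.
case: (leqP a m) => h.
  exists a; first by rewrite inE eqxx.
  by move=> x; rewrite inE => /orP[/eqP->//|/hm]; apply: leq_trans.
exists m; first by rewrite inE mX orbT.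
by move=> x; rewrite inE => /orP[/eqP->|/hm//]; apply: ltnW.
Qed.

Lemma seq_max (X : seq nat) : 0 < size X -> exists2 x0 : nat, x0 \in X & forall x : nat, x \in X -> x <= x0.
Proof.
elim: X => [//|a X IH] _.
case: X IH => [|b X] IH.
  by exists a; rewrite ?inE ?eqxx // => x; rewrite inE => /eqP->.
have [m mX hm] := IH isT.
case: (leqP a m) => h.
  exists m; first by rewrite inE mX orbT.
  by move=> x; rewrite inE => /orP[/eqP->//|/hm].
exists a; first by rewrite inE eqxx.
by move=> x; rewrite inE => /orP[/eqP->//|/hm] hx; apply: leq_trans hx (ltnW h).
Qed.

Definition dbad (D : seq (nat * nat)) (p : nat * nat) :=
  has (fun ab => p.1 + ab.1 == p.2 + ab.2) D.

Lemma count_has_le (A : Type) (B : Type) (D : seq B) (q : B -> pred A) (s : seq A) (m : nat) :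
  (forall b, count (q b) s <= m) ->
  count (fun p => has (fun b => q b p) D) s <= m * size D.
Proof.
move=> hq; elim: D => [|b D IH] /=; first by rewrite count_pred0.
have := count_predUI (q b) (fun p => has (fun b => q b p) D) s.
have -> : count (predU (q b) (fun p => has (fun b => q b p) D)) s =
          count (fun p => q b p || has (fun b => q b p) D) s by [].
have := hq b; lia.
Qed.

Lemma count_eq_le1 (X : seq nat) (P : pred nat) z :
  uniq X -> (forall x, P x -> x = z) -> count P X <= 1.
Proof.
move=> uX hP; apply: leq_trans (sub_count (a2 := pred1 z) _ X) _.
  by move=> x /hP ->; rewrite /= eqxx.
by rewrite count_uniq_mem // leq_b1.
Qed.

Lemma chain (X Y S : seq nat) (D : seq (nat * nat)) :
  uniq X -> uniq Y -> 0 < size X -> 0 < size Y ->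
  size S + 2 * size D + 2 <= size X + size Y ->
  exists x y, [/\ x \in X, y \in Y, x + y \notin S & ~~ dbad D (x, y)].
Proof.
move=> uX uY sX sY hsz.
have [x0 x0X hx0] := seq_min sX.
have [y0 y0Y hy0] := seq_max sY.
set X' := [seq x <- X | x != x0].
have uX' : uniq X' by exact: filter_uniq.
have hX' : forall x, x \in X' -> x \in X /\ x0 < x.
  move=> x; rewrite mem_filter => /andP[ne xX]; split => //.
  by rewrite ltn_neqAle eq_sym ne hx0.
have szX' : size X' = (size X).-1.
  rewrite size_filter; have := count_predC (pred1 x0) X.
  rewrite count_uniq_mem // x0X.
  have -> : count (predC (pred1 x0)) X = count (fun x => x != x0) X by [].
  move=> <-; by rewrite add1n.
set Pl := [seq (x0, y) | y <- Y] ++ [seq (x, y0) | x <- X'].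
have szPl : size Pl = size Y + (size X).-1 by rewrite size_cat !size_map szX'.
set sm := fun p : nat * nat => p.1 + p.2.
have uPl : uniq (map sm Pl).
  rewrite map_cat cat_uniq -!map_comp; apply/and3P; split.
  - by rewrite (map_inj_uniq (f := sm \o (fun y => (x0, y)))) // => a b /= /addnI.
  - apply/hasPn => z /mapP [x xX' ->] /=; apply/negP => /mapP [y yY] /= eq.
    have [_ lt] := hX' x xX'; have := hy0 y yY; move: eq; rewrite /sm /=; lia.
  - by rewrite (map_inj_uniq (f := sm \o (fun x => (x, y0)))) // => a b /= /addIn.
set bad := fun p : nat * nat => (sm p \in S) || dbad D p.
have : has (predC bad) Pl.
  rewrite has_predC; apply/negP; rewrite all_count => /eqP hall.
  have h1 : count bad Pl <= count (fun p => sm p \in S) Pl + count (dbad D) Pl.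
    have := count_predUI (fun p => sm p \in S) (dbad D) Pl.
    have -> : count (predU (fun p => sm p \in S) (dbad D)) Pl = count bad Pl by [].
    lia.
  have h2 : count (fun p => sm p \in S) Pl <= size S.
    have := count_mem_le S uPl; rewrite count_map.
    by have -> : count (preim sm (mem S)) Pl = count (fun p => sm p \in S) Pl by [].
  have h3 : count (dbad D) Pl <= 2 * size D.
    apply: (@count_has_le _ _ D (fun ab p => p.1 + ab.1 == p.2 + ab.2) Pl 2) => [[a b]].
    rewrite count_cat !count_map.
    have c1 : count (preim (fun y => (x0, y)) (fun p => p.1 + (a, b).1 == p.2 + (a, b).2)) Y <= 1.
      by apply: (count_eq_le1 (z := x0 + a - b)) => // y /= /eqP; lia.
    have c2 : count (preim (fun x => (x, y0)) (fun p => p.1 + (a, b).1 == p.2 + (a, b).2)) X' <= 1.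
      by apply: (count_eq_le1 (z := y0 + b - a)) => // y /= /eqP; lia.
    exact: leq_add c1 c2.
  rewrite szPl in hall; lia.
case/hasP => [[x y]] inPl /= nb.
exists x, y; move: nb; rewrite /bad negb_or => /andP[nS nD]; split => //.
- move: inPl; rewrite mem_cat => /orP[/mapP[y' _ [-> _]] // | /mapP[x' x'X [-> _]]].
  by have [] := hX' x' x'X.
- move: inPl; rewrite mem_cat => /orP[/mapP[y' y'Y [_ ->]] // | /mapP[x' _ [_ ->]] //].
Qed.

Lemma pair_choice (k : nat) (Fx Fy S : seq nat) (D : seq (nat * nat)) :
  size Fx < k -> size Fy < k ->
  size S + 2 * size D + 2 + size Fx + size Fy <= 2 * k ->
  exists x y, [/\ [&& 0 < x, x <= k & x \notin Fx], [&& 0 < y, y <= k & y \notin Fy],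
     x + y \notin S & ~~ dbad D (x, y)].
Proof.
move=> hx hy hs.
have ax := avoid_size k Fx; have ay := avoid_size k Fy.
have s1 : 0 < size (avoid k Fx) by lia.
have s2 : 0 < size (avoid k Fy) by lia.
have s3 : size S + 2 * size D + 2 <= size (avoid k Fx) + size (avoid k Fy) by lia.
have [x [y [xX yY nS nD]]] := chain (filter_uniq _ (iota_uniq 1 k)) (filter_uniq _ (iota_uniq 1 k)) s1 s2 s3.
by exists x, y; rewrite -!mem_avoid.
Qed.

Lemma single_bad (T : finType) (P : pred T) (g : T -> nat) m :
  #|[set w | P w]| < 2 * m ->
  exists a, forall j, j != a -> #|[set w | P w && (g w == j)]| < m.
Proof.
move=> hm.
case: (pickP (fun w => P w && (m <= #|[set z | P z && (g z == g w)]|))) => [w /andP[Pw hw] | none].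
  exists (g w) => j ne; rewrite ltnNge; apply/negP => hj.
  have disj : [set z | P z && (g z == g w)] :&: [set z | P z && (g z == j)] = set0.
    apply/setP => z; rewrite !inE; apply/negP => /andP[/andP[_ /eqP->] /andP[_ /eqP ej]].
    by rewrite ej eqxx in ne.
  have sub : [set z | P z && (g z == g w)] :|: [set z | P z && (g z == j)] \subset [set w | P w].
    by apply/subsetP => z; rewrite !inE => /orP[/andP[->]|/andP[->]].
  have := subset_leq_card sub; rewrite cardsU disj cards0; lia.
exists 0 => j _; rewrite ltnNge; apply/negP => hj.
have : 0 < #|[set w | P w && (g w == j)]| by apply: leq_trans hj; lia.
case/card_gt0P => z; rewrite inE => /andP[Pz /eqP gz].
by have := none z; rewrite /= Pz gz hj.
Qed.

Section Main.
Variables (T : finType) (e : rel T).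
Hypotheses (esym : symmetric e) (eirr : irreflexive e).
Variable k : nat.
Hypothesis hk : 3 * max_deg e + 4 <= 2 * k.

Definition ind (S : {set T}) : rel T := fun x y => [&& x \in S, y \in S & e x y].

Lemma ind_sym S : symmetric (ind S).
Proof. by move=> x y; rewrite /ind esym andbCA. Qed.

Lemma ind_irr S : irreflexive (ind S).
Proof. by move=> x; rewrite /ind eirr !andbF. Qed.

Lemma deg_ind S u : deg (ind S) u <= max_deg e.
Proof.
apply: leq_trans (leq_bigmax (F := deg e) u).
by apply: subset_leq_card; apply/subsetP => w; rewrite !inE => /and3P[].
Qed.

Definition wnsd S c := forall u w, ind S u w -> (1 < deg (ind S) u) || (1 < deg (ind S) w) ->
  sigma (ind S) c u <> sigma (ind S) c w.
Definition Inv S c := [/\ edge_coloring (ind S) k c, quasi_majority (ind S) c & wnsd S c].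

Section Step.
Variables (S : {set T}) (v : T).
Hypothesis vS : v \in S.
Variable c : T -> T -> nat.
Hypothesis hc : Inv (S :\ v) c.

Definition N := [set w | ind S v w].
Definition s u := sigma (ind (S :\ v)) c u.
Definition cnt u j := #|[set w | ind (S :\ v) u w && (c u w == j)]|.
Definition dg u := deg (ind (S :\ v)) u.

Definition good (f : T -> nat) := [/\ forall u, u \in N -> 0 < f u <= k,
  forall u, u \in N -> cnt u (f u) < ceil_div (dg u).+1 2,
  forall j, #|[set u | (u \in N) && (f u == j)]| <= ceil_div #|N| 2,
  forall u w, u \in N -> ind (S :\ v) u w -> s u + f u <> s w + (if w \in N then f w else 0) &
  forall u, u \in N -> (1 < #|N|) || (1 < (dg u).+1) -> \sum_(w in N) f w <> s u + f u].

Definition ext (f : T -> nat) := fun a b => if a == v then f b else if b == v then f a else c a b.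

Lemma indS' u w : ind (S :\ v) u w = [&& u != v, w != v & ind S u w].
Proof.
rewrite /ind !inE; case: (u == v); case: (w == v) => //=; rewrite ?andbF //.
Qed.

Lemma ind_vl w : ind S v w = (w \in N).
Proof. by rewrite inE. Qed.

Lemma ind_vr w : ind S w v = (w \in N).
Proof. by rewrite inE ind_sym. Qed.

Lemma N_ne w : w \in N -> w != v.
Proof. by rewrite inE; apply: contraTneq => ->; rewrite ind_irr. Qed.

Lemma deg_S u : u != v -> deg (ind S) u = (u \in N) + dg u.
Proof.
move=> uv; rewrite /deg (cardsD1 v) inE ind_vr; congr (_ + _).
by apply: eq_card => w; rewrite !inE indS' uv.
Qed.

Lemma deg_Sv : deg (ind S) v = #|N|.
Proof. by []. Qed.

Lemma sigma_S f u : u != v ->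
  sigma (ind S) (ext f) u = (if u \in N then f u else 0) + s u.
Proof.
move=> uv; rewrite /sigma (bigID (pred1 v)) /=; congr (_ + _).
  case: ifP => uN.
    rewrite (big_pred1 v) /ext; first by rewrite (negbTE uv) eqxx.
    by move=> w /=; case: eqP => [->|]; rewrite ?ind_vr ?uN ?andbF.
  rewrite big_pred0 // => w; case: eqP => [->|]; by rewrite ?ind_vr ?uN ?andbF.
apply: eq_big => [w|w /andP[_ wv]]; first by rewrite indS' uv andbC.
by rewrite /ext (negbTE uv) (negbTE wv).
Qed.

Lemma sigma_Sv f : sigma (ind S) (ext f) v = \sum_(w in N) f w.
Proof. by apply: eq_big => [w|w _]; rewrite ?inE // /ext eqxx. Qed.

Lemma cnt_S f u j : u != v ->
  #|[set w | ind S u w && (ext f u w == j)]| = ((u \in N) && (f u == j)) + cnt u j.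
Proof.
move=> uv; rewrite (cardsD1 v) !inE ind_vr /ext eqxx (negbTE uv); congr (_ + _).
  by rewrite inE.
rewrite /cnt; apply: eq_card => w; rewrite !inE indS' uv /=.
by case: (w =P v) => //= _; rewrite andbT.
Qed.

Lemma cnt_Sv f j : #|[set w | ind S v w && (ext f v w == j)]| = #|[set u | (u \in N) && (f u == j)]|.
Proof. by apply: eq_card => w; rewrite !inE /ext eqxx. Qed.


Lemma extend f : good f -> Inv S (ext f).
Proof.
case: hc => [hce hcq hcn] [G1 G2 G3 G4 G5].
have ecv : forall b, b \in N -> ext f v b = f b /\ ext f b v = f b.
  by move=> b bN; rewrite /ext eqxx (negbTE (N_ne bN)).
split.
- move=> a b.
  case: (a =P v) => [->|/eqP av].
    by rewrite ind_vl => bN; have [-> ->] := ecv b bN; split => //; apply: G1.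
  case: (b =P v) => [->|/eqP bv].
    by rewrite ind_vr => aN; have [-> ->] := ecv a aN; split => //; apply: G1.
  move=> ab; have ab' : ind (S :\ v) a b by rewrite indS' av bv.
  by rewrite /ext (negbTE av) (negbTE bv); apply: hce.
- move=> u j.
  case: (u =P v) => [->|/eqP uv]; first by rewrite cnt_Sv deg_Sv; apply: G3.
  rewrite cnt_S // deg_S //.
  have := hcq u j; rewrite -/(cnt u j) -/(dg u).
  case: (boolP (u \in N)) => uN /= h; last by rewrite /ceil_div in h *; lia.
  case: (f u =P j) => [<-|_] /=; last by rewrite /ceil_div in h *; lia.
  have := G2 u uN; rewrite /ceil_div in h *; lia.
- have hv : forall b, b \in N -> (1 < deg (ind S) v) || (1 < deg (ind S) b) ->
      sigma (ind S) (ext f) v <> sigma (ind S) (ext f) b.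
    move=> b bN; rewrite deg_Sv deg_S ?N_ne // bN sigma_Sv sigma_S ?N_ne // bN add1n => h.
    by rewrite addnC; apply: G5.
  move=> a b.
  case: (a =P v) => [->|/eqP av]; first by rewrite ind_vl; apply: hv.
  case: (b =P v) => [->|/eqP bv].
    by rewrite ind_vr => aN; rewrite orbC => /(hv a aN) /nesym.
  move=> ab; have ab' : ind (S :\ v) a b by rewrite indS' av bv.
  rewrite !sigma_S // !deg_S //.
  case: (boolP (a \in N)) => aN.
    by move=> _; rewrite addnC [_ + s b]addnC; apply: G4.
  case: (boolP (b \in N)) => bN.
    move=> _ H; apply: (G4 b a bN); first by rewrite ind_sym.
    by rewrite (negbTE aN); lia.
  by rewrite !add0n; apply: hcn.
Qed.


Lemma dgN u : u \in N -> (dg u).+1 <= max_deg e.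
Proof. by move=> uN; have := deg_ind S u; rewrite deg_S ?N_ne // uN add1n. Qed.

Lemma cardN : #|N| <= max_deg e.
Proof. by have := deg_ind S v; rewrite deg_Sv. Qed.

Lemma kbig : max_deg e + 2 <= k.
Proof. by move: hk; lia. Qed.

Lemma s_pos u : 0 < dg u -> 0 < s u.
Proof.
case: hc => hce _ _; case/card_gt0P => w; rewrite inE => uw.
rewrite /s /sigma (bigD1 w) //=; have [_ /andP[h _]] := hce u w uw.
by apply: leq_trans h (leq_addr _ _).
Qed.

Lemma abad u : exists a, forall j, j != a -> cnt u j < ceil_div (dg u).+1 2.
Proof.
have h : #|[set w | ind (S :\ v) u w]| < 2 * ceil_div (dg u).+1 2.
  by rewrite /ceil_div -/(deg _ u) -/(dg u); lia.
have [a ha] := single_bad (c u) h.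
by exists a.
Qed.

Lemma cnt_le u j : cnt u j <= ceil_div (dg u) 2.
Proof. by case: hc => _ hq _; apply: hq. Qed.

Lemma good0 : #|N| = 0 -> exists f, good f.
Proof.
move=> /eqP; rewrite cards_eq0 => /eqP N0.
exists (fun _ => 1); split.
- by move=> u; rewrite N0 inE.
- by move=> u; rewrite N0 inE.
- move=> j; rewrite (_ : [set u | _] = set0) ?cards0 //.
  by apply/setP => z; rewrite N0 !inE.
- by move=> u w; rewrite N0 inE.
- by move=> u; rewrite N0 inE.
Qed.

Lemma good1 : #|N| = 1 -> exists f, good f.
Proof.
move/eqP/cards1P => [p Np].
have pN : p \in N by rewrite Np inE.
have [a ha] := abad p.
set F := a :: [seq s w - s p | w <- enum [set w | ind (S :\ v) p w]].
have szF : size F = (dg p).+1 by rewrite /= size_map -cardE.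
have [x [x0 xk xF]] : exists x, [/\ 0 < x, x <= k & x \notin F].
  apply: pigeon; rewrite szF; have := dgN pN; have := kbig; lia.
move: xF; rewrite inE negb_or => /andP[xa xF].
exists (fun _ => x); split.
- by move=> u _; rewrite x0 xk.
- by move=> u; rewrite Np inE => /eqP ->; apply: ha.
- move=> j; rewrite Np cards1 /ceil_div /=.
  apply: leq_trans (subset_leq_card (B := [set p]) _) _; last by rewrite cards1.
  by apply/subsetP => z; rewrite !inE => /andP[].
- move=> u w; rewrite Np inE => /eqP -> pw.
  have wN : (w \in [set p]) = false.
    by rewrite inE; apply/negP => /eqP wp; rewrite wp ind_irr in pw.
  rewrite wN addn0 => h.
  move/negP: xF; apply; apply/mapP; exists w; first by rewrite mem_enum inE.
  lia.
- move=> u; rewrite Np inE => /eqP -> /=; rewrite cards1 /= => h.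
  rewrite big_set1; have := s_pos h; lia.
Qed.


Definition GInv (P : {set T}) (f : T -> nat) := [/\ forall u, u \in P -> 0 < f u <= k,
  forall u, u \in P -> cnt u (f u) < ceil_div (dg u).+1 2,
  forall j, #|[set u | (u \in P) && (f u == j)]| <= ceil_div #|N| 2 - 1 &
  forall u w, u \in P -> ind (S :\ v) u w -> (w \in N) ==> (w \in P) ->
     s u + f u <> s w + (if w \in P then f w else 0)].

Lemma ginv0 : exists f, GInv set0 f.
Proof.
exists (fun _ => 1); split => [u|u|j|u w]; rewrite ?inE //.
by rewrite (_ : [set u | _] = set0) ?cards0 //; apply/setP => z; rewrite !inE.
Qed.

Lemma greedy n : forall P : {set T}, #|P| <= n -> P \subset N -> #|P| + 2 <= #|N| -> exists f, GInv P f.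
Proof.
elim: n => [|n IH] P hP PN hPN; case: (set_0Vmem P) => [->|[u uP]]; try exact: ginv0.
  by move: hP; rewrite (cardsD1 u) uP.
set P' := P :\ u.
have cP : #|P| = #|P'|.+1 by rewrite (cardsD1 u) uP.
have uN : u \in N by apply: (subsetP PN).
have [f [I1 I2 I3 I4]] : exists f, GInv P' f.
  apply: IH; first by move: hP; rewrite cP.
    by apply: subset_trans PN; apply: subsetDl.
  by move: hPN; rewrite cP; lia.
have [a ha] := abad u.
have hb0 : #|[set w | w \in P']| < 2 * (ceil_div #|N| 2 - 1).
  rewrite (eq_card (B := P')); last by move=> z; rewrite inE.
  move: hPN; rewrite cP /ceil_div; lia.
have [b hb] := single_bad f hb0.
set F := [:: a, b & [seq (s w + (if w \in P' then f w else 0)) - s u | w <- enum [set w | ind (S :\ v) u w]]].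
have szF : size F = (dg u).+2 by rewrite /= size_map -cardE.
have [col [c0 ck cF]] : exists x, [/\ 0 < x, x <= k & x \notin F].
  apply: pigeon; rewrite szF; have := dgN uN; have := kbig; lia.
move: cF; rewrite !inE !negb_or => /and3P[ca cb cF].
have mP : forall z, (z \in P) = (z == u) || (z \in P').
  by move=> z; rewrite in_setD1; case: eqP => // ->; rewrite uP.
have cFw : forall w, ind (S :\ v) u w -> s u + col <> s w + (if w \in P' then f w else 0).
  move=> w uw h; move/negP: cF; apply; apply/mapP; exists w; first by rewrite mem_enum inE.
  lia.
exists (fun z => if z == u then col else f z); split.
- move=> z; rewrite mP; case: eqP => [_|_ /= zP']; first by rewrite c0 ck.
  exact: I1.
- move=> z; rewrite mP; case: eqP => [->|_ /= zP']; first by move=> _; apply: ha.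
  exact: I2.
- move=> j; rewrite (cardsD1 u) !inE uP eqxx /=.
  rewrite (eq_card (B := [set z | (z \in P') && (f z == j)])); last first.
    by move=> z; case: (z =P u) => [->|/eqP zu]; rewrite !inE ?eqxx ?(negbTE zu) //=.
  case: eqP => [<-|_] /=; last by apply: I3.
  by have := hb col cb; rewrite add1n.
- move=> z w; rewrite mP; case: eqP => [-> _|zu /= zP'] zw.
    have wu : (w == u) = false by apply/negP => /eqP wu; rewrite wu ind_irr in zw.
    rewrite wu mP wu /= => _; exact: cFw.
  case: (w =P u) zw => [->|/eqP wu] zw.
    rewrite uP => _ h; have uz : ind (S :\ v) u z by rewrite ind_sym.
    apply: (cFw z uz).
    by rewrite zP'; lia.
  rewrite mP (negbTE wu) /= => hw; exact: I4.
Qed.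


Lemma card_nb x y : #|[set w | ind (S :\ v) x w && (w != y)]| + ind (S :\ v) x y = dg x.
Proof.
rewrite /dg /deg [RHS](cardsD1 y) inE addnC; congr (_ + _).
by apply: eq_card => w; rewrite !inE andbC.
Qed.

Lemma good2 : 2 <= #|N| -> exists f, good f.
Proof.
move=> hN.
have [p pN] : exists p, p \in N by apply/card_gt0P; lia.
have [q qNp] : exists q, q \in N :\ p.
  by apply/card_gt0P; move: hN; rewrite (cardsD1 p) pN; lia.
have qN : q \in N by move: qNp; rewrite in_setD1 => /andP[].
have qp : q != p by move: qNp; rewrite in_setD1 => /andP[].
set R := N :\ p :\ q.
have cR : #|N| = #|R|.+2 by rewrite (cardsD1 p) pN (cardsD1 q (N :\ p)) qNp.
have RN : R \subset N by apply: subset_trans (subsetDl _ _) (subsetDl _ _).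
have memR : forall z, (z \in R) = [&& z != q, z != p & z \in N] by move=> z; rewrite !in_setD1.
have [f [I1 I2 I3 I4]] : exists f, GInv R f.
  by apply: (greedy (n := #|R|)) => //; lia.
set Q := \sum_(u in R) f u.
set adj := ind (S :\ v) p q.
have adjq : ind (S :\ v) q p = adj by rewrite ind_sym.
set tau := fun w => s w + (if w \in R then f w else 0).
have [ap hap] := abad p; have [aq haq] := abad q.
set Fx := [:: ap, s q - Q & [seq tau w - s p | w <- enum [set w | ind (S :\ v) p w && (w != q)]]].
set Fy := [:: aq, s p - Q & [seq tau w - s q | w <- enum [set w | ind (S :\ v) q w && (w != p)]]].
set Sl := [seq (s u + f u) - Q | u <- enum R].
set Dl := (0, 0) :: (if adj then [:: (s p, s q)] else [::]).
have szFx : size Fx + adj = (dg p).+2 by rewrite /= size_map -cardE addSn addSn card_nb.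
have szFy : size Fy + adj = (dg q).+2 by rewrite /= size_map -cardE addSn addSn -adjq card_nb.
have szSl : size Sl = #|R| by rewrite size_map -cardE.
have szDl : size Dl = adj + 1 by rewrite /Dl; case: (adj).
have dp := dgN pN; have dq := dgN qN; have cN := cardN; have kb := kbig.
have h1 : size Fx < k by move: szFx dp kb; clear; lia.
have h2 : size Fy < k by move: szFy dq kb; clear; lia.
have h3 : size Sl + 2 * size Dl + 2 + size Fx + size Fy <= 2 * k.
  move: szFx szFy szSl szDl dp dq cN cR hk; clear; lia.
have [x [y [hx hy nS nD]]] := @pair_choice k Fx Fy Sl Dl h1 h2 h3.
move: hx hy; rewrite !inE !negb_or => /and3P[x0 xk /and3P[xap xQ xF]] /and3P[y0 yk /and3P[yaq yQ yF]].
have [xy hadj] : x != y /\ (adj -> x + s p != y + s q).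
  move: nD; rewrite /dbad /Dl => /norP[xy nadj].
  split; first by move: xy; rewrite /= !addn0.
  by move=> a; move: nadj; rewrite a => /norP[].
have Fxw : forall w, ind (S :\ v) p w -> w != q -> s p + x <> tau w.
  move=> w pw wq h; move/negP: xF; apply; apply/mapP; exists w; first by rewrite mem_enum inE pw.
  by rewrite -h addKn.
have Fyw : forall w, ind (S :\ v) q w -> w != p -> s q + y <> tau w.
  move=> w qw wp h; move/negP: yF; apply; apply/mapP; exists w; first by rewrite mem_enum inE qw.
  by rewrite -h addKn.
have pR : (p \in R) = false by rewrite memR eqxx andbF.
have qR : (q \in R) = false by rewrite memR eqxx.
have pq : (p == q) = false by apply/negP => /eqP pq; rewrite pq eqxx in qp.
have qpf : (q == p) = false by apply/negbTE.
exists (fun z => if z == p then x else if z == q then y else f z); split.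
- move=> z zN; case: eqP => [_|/eqP zp]; first by rewrite x0 xk.
  case: eqP => [_|/eqP zq]; first by rewrite y0 yk.
  by apply: I1; rewrite memR zq zp.
- move=> z zN; case: eqP => [->|/eqP zp]; first by apply: hap.
  case: eqP => [->|/eqP zq]; first by apply: haq.
  by apply: I2; rewrite memR zq zp.
- move=> j; rewrite (cardsD1 p) in_set pN eqxx (cardsD1 q) in_setD1 in_set qp qN qpf /=.
  rewrite (eq_card (B := [set z | (z \in R) && (f z == j)])); last first.
    move=> z; rewrite !in_setD1 !in_set.
    rewrite !in_set1; by case: (z == p); case: (z == q); rewrite /= ?andbF ?andbT.
  have := I3 j; move: xy cR; rewrite /ceil_div; clear.
  by case: (x =P j) => [->|_]; case: (y =P j) => [->|_] //=; rewrite ?eqxx //; lia.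
- move=> u w uN uw.
  have Fw : forall w, w != p -> w != q -> tau w = s w + (if w \in N then f w else 0).
    by move=> z zp zq; rewrite /tau memR zp zq.
  case: (u =P p) => [up|/eqP up].
    rewrite up in uw *.
    case: (w =P q) => [wq|/eqP wq].
      rewrite wq in uw *; rewrite qN qpf -/adj in uw *.
      by apply/eqP; rewrite addnC [s q + y]addnC; exact: hadj.
    have wp : w != p by apply/eqP => wp; rewrite wp ind_irr in uw.
    by rewrite (negbTE wp) -Fw //; exact: Fxw.
  case: (u =P q) => [uq|/eqP uq].
    rewrite uq in uw *.
    case: (w =P p) => [wp|/eqP wp].
      rewrite wp in uw *; rewrite pN adjq in uw *.
      by apply/eqP; rewrite eq_sym addnC [s q + y]addnC; exact: hadj.
    have wq : w != q by apply/eqP => wq; rewrite wq ind_irr in uw.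
    by rewrite (negbTE wq) -Fw //; exact: Fyw.
  have uR : u \in R by rewrite memR up uq uN.
  case: (w =P p) => [wp|/eqP wp].
    rewrite wp in uw *; rewrite pN.
    have pu : ind (S :\ v) p u by rewrite ind_sym.
    have := Fxw u pu uq; rewrite /tau uR => h H; apply: h; symmetry; exact: H.
  case: (w =P q) => [wq|/eqP wq].
    rewrite wq in uw *; rewrite qN.
    have qu : ind (S :\ v) q u by rewrite ind_sym.
    have := Fyw u qu up; rewrite /tau uR => h H; apply: h; symmetry; exact: H.
  rewrite -Fw //; apply: I4 => //.
  by rewrite memR wp wq; case: (w \in N).
- move=> u uN _.
  have sumN : \sum_(w in N) (if w == p then x else if w == q then y else f w) = x + (y + Q).
    rewrite (big_setD1 p pN) (big_setD1 q qNp) eqxx qpf eqxx.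
    congr (_ + (_ + _)); rewrite /Q; apply: eq_bigr => z.
    by rewrite !in_setD1 => /and3P[zq zp _]; rewrite (negbTE zp) (negbTE zq).
  rewrite sumN.
  case: (u =P p) => [->|/eqP up].
    by move=> h; move/eqP: yQ; apply; move: h; clear; lia.
  case: (u =P q) => [->|/eqP uq].
    by move=> h; move/eqP: xQ; apply; move: h; clear; lia.
  have uR : u \in R by rewrite memR up uq uN.
  move=> h; move/negP: nS; apply; apply/mapP; exists u; first by rewrite mem_enum.
  by move: h; clear; lia.
Qed.



End Step.

Lemma exists_ext (S : {set T}) (v : T) (c : T -> T -> nat) : v \in S -> Inv (S :\ v) c -> exists c', Inv S c'.
Proof.
move=> vS hc.
have [f hf] : exists f, good S v c f.
  case: (ltnP #|N S v| 2) => h; last exact: good2.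
  case: #|N S v| h (@good0 S v c) (@good1 S v vS c hc) => [|[|//]] _ h0 h1; [exact: h0 | exact: h1].
by exists (ext v c f); apply: extend.
Qed.

Lemma all_sets n : forall S : {set T}, #|S| <= n -> exists c, Inv S c.
Proof.
elim: n => [|n IH] S hS; case: (set_0Vmem S) => [->|[v vS]].
- exists (fun _ _ => 1); split => [u w|u j|u w]; rewrite /ind ?inE //.
  by rewrite (_ : [set _ | _] = set0) ?cards0 //; apply/setP => z; rewrite !inE.
- by move: hS; rewrite (cardsD1 v) vS.
- exists (fun _ _ => 1); split => [u w|u j|u w]; rewrite /ind ?inE //.
  by rewrite (_ : [set _ | _] = set0) ?cards0 //; apply/setP => z; rewrite !inE.
- have [c hc] : exists c, Inv (S :\ v) c.
    by apply: IH; move: hS; rewrite (cardsD1 v) vS.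
  exact: exists_ext hc.
Qed.

End Main.

Lemma nb1 (T : finType) (e : rel T) a b z : deg e a = 1 -> e a b -> e a z -> z = b.
Proof.
move/eqP/cards1P => [t ht] ab az.
have : b \in [set t0 | e a t0] by rewrite inE.
have : z \in [set t0 | e a t0] by rewrite inE.
by rewrite ht !inE => /eqP -> /eqP ->.
Qed.

Lemma comp2 (T : finType) (e : rel T) : simple_graph e -> forall u w, e u w ->
  deg e u = 1 -> deg e w = 1 -> #|[set y | connect e u y]| = 2.
Proof.
move=> [esym eirr] u w uw du dw.
have -> : [set y | connect e u y] = [set u; w].
  apply/setP => y; rewrite !inE; apply/idP/idP.
    have step : forall x z, x \in [set u; w] -> e x z -> z \in [set u; w].
      move=> x z; rewrite !inE => /orP[] /eqP -> xz.
        by rewrite (nb1 du uw xz) eqxx orbT.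
      have wu : e w u by rewrite esym.
      by rewrite (nb1 dw wu xz) eqxx.
    have hp : forall p x, x \in [set u; w] -> path e x p -> last x p \in [set u; w].
      elim => [|z p IH] x hx //= /andP[xz pz]; apply: IH pz; exact: step xz.
    case/connectP => p pp ->.
    by have := hp p u (setU11 _ _) pp; rewrite !inE.
  by case/orP => /eqP ->; [exact: connect0 | exact: connect1].
by rewrite cards2; case: eqP => // uw'; rewrite uw' eirr in uw.
Qed.

Theorem mainTheorem7 (T : finType) (e : rel T) :
  simple_graph e -> nice e ->
  qm_nsd_colorable e (ceil_div (3 * max_deg e + 4) 2).
Proof.
move=> sg hnice; have [esym eirr] := sg.
set k := ceil_div (3 * max_deg e + 4) 2.
have hk : 3 * max_deg e + 4 <= 2 * k by rewrite /k /ceil_div; lia.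
have [c [hce hcq hcn]] := all_sets esym eirr hk (leqnn #|[set: T]|).
have indT : forall x y, ind e setT x y = e x y by move=> x y; rewrite /ind !inE.
have degT : forall u, deg (ind e setT) u = deg e u.
  by move=> u; apply: eq_card => w; rewrite !inE.
have sigT : forall u, sigma (ind e setT) c u = sigma e c u.
  by move=> u; apply: eq_bigl => w; rewrite indT.
exists c; split.
- by move=> u w uw; apply: hce; rewrite indT.
- move=> u j; rewrite -degT.
  rewrite (eq_card (B := [set w | ind e setT u w && (c u w == j)])) ?hcq //.
  by move=> w; rewrite !inE indT.
- move=> u w uw; rewrite -!sigT; apply: hcn; first by rewrite indT.
  rewrite !degT.
  case: (leqP (deg e u) 1) => du //=; case: (leqP (deg e w) 1) => dw //=.
  have pos : forall a b, e a b -> 0 < deg e a.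
    by move=> a b ab; apply/card_gt0P; exists b; rewrite inE.
  have du1 : deg e u = 1 by have := pos _ _ uw; lia.
  have dw1 : deg e w = 1 by have := pos w u (_ : e w u); rewrite esym; lia.
  by have := hnice u; rewrite (comp2 sg uw du1 dw1).
Qed.
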